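(* Let $N\ge 1$ and let $\phi: H_0(S_N)\to M_N$ be the quotient morphism of monoids sending $\pi_i\mapsto\pi_i$, where $M_N$ is the quotient of $H_0(S_N)$ by the additional relations $\pi_i\pi_{i+1}\pi_i=\pi_i\pi_{i+1}$ for $1\le i\le N-2$. For every $m\in M_N$, consider the fiber $F_m=\{w\in S_N:\ \phi(\pi_w)=m\}$. Every nonempty fiber $F_m$ contains a unique $[321]$-avoiding permutation, and it is of minimal length among the elements of $F_m$; and $F_m$ contains a unique $[231]$-avoiding permutation, and it is of maximal length among the elements of $F_m$.
   Context: $S_N$ is the symmetric group generated by the simple transpositions $s_1,\dots,s_{N-1}$. Permutations are written in one-line notation $x=[x(1),\dots,x(N)]$ and composed as functions, $(uv)(j)=u(v(j))$, so $xs_i$ is obtained from $x$ by swapping the entries in positions $i,i+1$. The length $\operatorname{len}(x)$ is the length of a reduced (minimal-length) word for $x$ in the $s_i$, i.e. the number of inversions. The $0$-Hecke monoid $H_0(S_N)$ is generated by $\pi_1,\dots,\pi_{N-1}$ with relations $\pi_i^2=\pi_i$, $\pi_i\pi_j=\pi_j\pi_i$ for $|i-j|\ge2$, $\pi_i\pi_{i+1}\pi_i=\pi_{i+1}\pi_i\pi_{i+1}$; its elements are $\pi_w:=\pi_{i_1}\cdots\pi_{i_k}$ for $w\in S_N$, where $w=s_{i_1}\cdots s_{i_k}$ is any reduced word, and $w\mapsto \pi_w$ is a bijection. A permutation $x$ contains a pattern $\sigma\in S_k$ if some subsequence $x(i_1),\dots,x(i_k)$ with $i_1<\dots<i_k$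 is in the same relative order as $\sigma(1),\dots,\sigma(k)$; otherwise $x$ avoids $\sigma$. The monoid $M_N$ is isomorphic to the monoid $\operatorname{NDPF}_N$ of order-preserving, regressive ($f(x)\le x$) maps of $\{1,\dots,N\}$, with $\pi_i$ the map sending $i+1\mapsto i$ and fixing all other points. *)

(* Defs.v *)
From mathcomp Require Import all_boot all_order all_fingroup.
From Stdlib Require Import Relations.
Set Implicit Arguments. Unset Strict Implicit. Unset Printing Implicit Defensive.

(* Positions and values are 0-indexed: 'I_N = {0,...,N-1}; the generator
   s_i of the paper (1 <= i <= N-1) is [sgen N (i-1)], swapping positions
   i-1 and i (0-indexed). *)

Definition sgen (N : nat) (k : nat) : 'S_N :=
  match N return 'S_N with
  | 0 => 1%g
  | n.+1 => tperm (inord k : 'I_n.+1) (inord k.+1)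
  end.

(* A word in the generators: letter k stands for s_{k+1}; valid iff k.+1 < N. *)
Definition valid_word (N : nat) (r : seq nat) : Prop := all (fun k => k.+1 < N) r.

(* Value of a word s_{i1} ... s_{ik} as a composition of functions
   (u v)(j) = u(v(j)).  In mathcomp, (p * q) x = q (p x). *)
Fixpoint perm_of_word (N : nat) (r : seq nat) : 'S_N :=
  match r with
  | [::] => 1%g
  | k :: r' => (perm_of_word N r' * sgen N k)%g
  end.

Definition len (N : nat) (x : 'S_N) : nat :=
  #|[set p : 'I_N * 'I_N | (p.1 < p.2) && (x p.2 < x p.1)]|.

Definition reduced_word (N : nat) (r : seq nat) (x : 'S_N) : Prop :=
  valid_word N r /\ perm_of_word N r = x /\
  forall r', valid_word N r' -> perm_of_word N r' = x -> size r <= size r'.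

(* Pattern containment: sigma given by the relative order of its values. *)
Definition contains (N k : nat) (x : 'S_N) (sigma : 'I_k -> nat) : Prop :=
  exists f : 'I_k -> 'I_N,
    (forall a b : 'I_k, a < b -> f a < f b) /\
    (forall a b : 'I_k, (x (f a) < x (f b)) = (sigma a < sigma b)).

Definition avoids (N k : nat) (x : 'S_N) (sigma : 'I_k -> nat) : Prop :=
  ~ contains x sigma.

Definition pat321 : 'I_3 -> nat := fun a => nth 0 [:: 3; 2; 1] a.
Definition pat231 : 'I_3 -> nat := fun a => nth 0 [:: 2; 3; 1] a.

Inductive M_rel (N : nat) : seq nat -> seq nat -> Prop :=
  | Mr_idem i : i.+1 < N -> M_rel N [:: i; i] [:: i]
  | Mr_comm i j : i.+1 < N -> j.+1 < N -> (i.+1 < j \/ j.+1 < i) ->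
      M_rel N [:: i; j] [:: j; i]
  | Mr_braid i : i.+2 < N -> M_rel N [:: i; i.+1; i] [:: i.+1; i; i.+1]
  | Mr_extra i : i.+2 < N -> M_rel N [:: i; i.+1; i] [:: i; i.+1].

Definition M_step (N : nat) (u v : seq nat) : Prop :=
  exists a b l r, M_rel N l r /\ u = a ++ l ++ b /\ v = a ++ r ++ b.

Definition M_cong (N : nat) : relation (seq nat) :=
  clos_refl_sym_trans (seq nat) (M_step N).

(* phi(pi_x) = phi(pi_y) in M_N: reduced words of x and y are equal in M_N. *)
Definition same_image (N : nat) (x y : 'S_N) : Prop :=
  exists r s, reduced_word r x /\ reduced_word s y /\ M_cong N r s.

(* Main.v *)
Require Import Defs.
From mathcomp Require Import all_boot all_order all_fingroup.
From mathcomp Require Import zify.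
From Stdlib Require Import Relations Classical.
Set Implicit Arguments. Unset Strict Implicit. Unset Printing Implicit Defensive.


Lemma M_cong_ctx N p q u v : M_cong N u v -> M_cong N (p ++ u ++ q) (p ++ v ++ q).
Proof.
elim => {u v} [u v [a [b [l [r [H [-> ->]]]]]] | u | u v _ IH | u v w _ IH1 _ IH2].
- apply: rst_step; exists (p ++ a), (b ++ q), l, r; split => //.
  by split; rewrite !catA.
- exact: rst_refl.
- exact: rst_sym.
- exact: rst_trans IH1 IH2.
Qed.

Lemma M_cong_catl N p u v : M_cong N u v -> M_cong N (p ++ u) (p ++ v).
Proof. by move=> /(M_cong_ctx p [::]); rewrite !cats0. Qed.
Lemma M_cong_catr N q u v : M_cong N u v -> M_cong N (u ++ q) (v ++ q).
Proof. by move=> /(M_cong_ctx [::] q). Qed.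
Lemma M_cong_cons N b u v : M_cong N u v -> M_cong N (b :: u) (b :: v).
Proof. exact: (M_cong_catl [:: b]). Qed.
Lemma M_rel_cong N p q l r : M_rel N l r -> M_cong N (p ++ l ++ q) (p ++ r ++ q).
Proof. by move=> H; apply: rst_step; exists p, q, l, r. Qed.
Lemma M_trans N u v w : M_cong N u v -> M_cong N v w -> M_cong N u w.
Proof. exact: rst_trans. Qed.
Lemma M_sym N u v : M_cong N u v -> M_cong N v u.
Proof. exact: rst_sym. Qed.

Definition pik (k x : nat) := if x == k.+1 then k else x.
Fixpoint Fw (r : seq nat) (x : nat) : nat :=
  match r with [::] => x | k :: r' => pik k (Fw r' x) end.

Lemma Fw_cat r s x : Fw (r ++ s) x = Fw r (Fw s x).
Proof. by elim: r => //= k r ->. Qed.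

Ltac noif t := lazymatch t with context [if _ then _ else _] => fail | _ => idtac end.
Ltac pcase := match goal with
 | |- context [?a == ?b] => is_var a; case: (a =P b) => [?|?]; [subst a|]
 | |- context [?a == ?b] => noif a; noif b; case: (a =P b) => ? end.

Lemma M_rel_Fw N l r : M_rel N l r -> Fw l =1 Fw r.
Proof.
case=> [i _|i j _ _ hij|i _|i _] x /=; rewrite /pik;
  repeat pcase; lia.
Qed.

Lemma M_cong_Fw N u v : M_cong N u v -> Fw u =1 Fw v.
Proof.
elim => {u v} [u v [a [b [l [r [H [-> ->]]]]]] | u | u v _ IH | u v w _ IH1 _ IH2] x.
- by rewrite !Fw_cat (M_rel_Fw H).
- by [].
- by rewrite IH.
- by rewrite IH1 IH2.
Qed.

Lemma comm_through N k B : k.+1 < N -> all (fun x => x.+1 < N) B ->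
  all (fun x => (x.+1 < k) || (k.+1 < x)) B -> M_cong N (B ++ [:: k]) (k :: B).
Proof.
move=> hk; elim: B => [|b B IH] /=; first by move=> _ _; apply: rst_refl.
move=> /andP[hb hB] /andP[hbk hBk].
apply: M_trans (M_cong_cons b (IH hB hBk)) _.
have hd : b.+1 < k \/ k.+1 < b by case/orP: hbk; [left|right].
exact: (M_rel_cong [::] B (@Mr_comm N b k hb hk hd)).
Qed.

Definition run a c := iota a (c - a).

Lemma run_split a i c : a <= i -> i < c -> run a c = run a i ++ i :: run i.+1 c.
Proof.
move=> h1 h2; rewrite /run.
have -> : c - a = i - a + (c - i.+1).+1 by lia.
by rewrite iotaD subnKC.
Qed.

Lemma run_nil a : run a a = [::].
Proof. by rewrite /run subnn. Qed.

Lemma run_rcons a c : a <= c -> run a c.+1 = run a c ++ [:: c].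
Proof. by move=> h; rewrite (@run_split a c c.+1) // run_nil. Qed.

Lemma all_run (P : pred nat) a c : (forall x, a <= x < c -> P x) -> all P (run a c).
Proof.
move=> H; apply/allP => x; rewrite mem_iota => /andP[h1 h2]; apply: H; lia.
Qed.

Lemma AbsR N a i c : a <= i -> i < c -> c < N ->
  M_cong N (run a c ++ [:: i]) (run a c).
Proof.
move=> h1 h2 h3; rewrite (run_split h1 h2).
case: (ltngtP i.+1 c) => [h4||h4]; last 2 first.
- lia.
- rewrite -h4 run_nil -catA /=.
  have := M_rel_cong (run a i) [::] (@Mr_idem N i ltac:(lia)).
  by rewrite !cats0.
rewrite (@run_split i.+1 i.+1 c) // run_nil /= -catA /=.
apply: M_trans (M_cong_catl (run a i) (M_cong_cons i (M_cong_cons i.+1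
   (comm_through (k := i) (N := N) (B := run i.+2 c) _ _ _)))) _.
- lia.
- by apply: all_run => x; lia.
- by apply: all_run => x /andP[hx _]; apply/orP; right.
exact: (M_rel_cong (run a i) (run i.+2 c) (@Mr_extra N i ltac:(lia))).
Qed.

Lemma AbsL N a i c : a <= i -> i < c -> c < N ->
  M_cong N (i :: run a c) (run a c).
Proof.
move=> h1 h2 h3; rewrite (run_split h1 h2).
case: (ltngtP a i) => [h4||h4]; last 2 first.
- lia.
- rewrite h4 run_nil /=.
  exact: (M_rel_cong [::] (run i.+1 c) (@Mr_idem N i ltac:(lia))).
case: i h1 h2 h4 => [|j] h1 h2 h4; first lia.
rewrite (@run_split a j j.+1) // run_nil -catA /=.
apply: M_trans (M_cong_catr (j :: j.+1 :: run j.+2 c)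
   (M_sym (comm_through (k := j.+1) (N := N) (B := run a j) _ _ _))) _.
- lia.
- by apply: all_run => x; lia.
- by apply: all_run => x /andP[_ hx]; apply/orP; left; lia.
rewrite -catA /=.
apply: M_trans.
  exact: (M_sym (M_rel_cong (run a j) (run j.+2 c) (@Mr_braid N j ltac:(lia)))).
apply: M_trans.
  exact: (M_rel_cong (run a j) (run j.+2 c) (@Mr_extra N j ltac:(lia))).
exact: rst_refl.
Qed.

Lemma AbsR_all N a c B : c < N -> all (fun x => a <= x < c) B ->
  M_cong N (run a c ++ B) (run a c).
Proof.
move=> hc; elim: B => [|b B IH] /=; first by rewrite cats0 => _; apply: rst_refl.
move=> /andP[/andP[hb1 hb2] hB].
rewrite -cat1s catA.
apply: M_trans (M_cong_catr B (AbsR hb1 hb2 hc)) (IH hB).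
Qed.

Lemma AbsL_all N a c B : c < N -> all (fun x => a <= x < c) B ->
  M_cong N (B ++ run a c) (run a c).
Proof.
move=> hc; elim: B => [|b B IH] /=; first by move=> _; apply: rst_refl.
move=> /andP[/andP[hb1 hb2] hB].
apply: M_trans (M_cong_cons b (IH hB)) (AbsL hb1 hb2 hc).
Qed.

Definition NF N (f : nat -> nat) :=
  flatten [seq run (f j) j | j <- rev (iota 0 N)].

Lemma NF_ext N f g : (forall j, j < N -> f j = g j) -> NF N f = NF N g.
Proof.
move=> H; rewrite /NF; congr flatten; apply/eq_in_map => j.
by rewrite mem_rev mem_iota => /andP[_ hj]; rewrite H.
Qed.

Lemma all_flat (P : pred nat) (ss : seq (seq nat)) :
  (forall s, s \in ss -> all P s) -> all P (flatten ss).
Proof.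
elim: ss => //= s ss IH H; rewrite all_cat H ?mem_head // IH // => t ht.
by apply: H; rewrite inE ht orbT.
Qed.

Lemma NF_step N k f : k.+1 < N -> (forall x, f x <= x) ->
  (forall x y, x <= y -> f x <= f y) ->
  M_cong N (NF N f ++ [:: k]) (NF N (fun x => f (pik k x))).
Proof.
move=> hk hreg hmon.
have [m hm] : exists m, N = k.+2 + m by exists (N - k.+2); lia.
subst N.
have E : iota 0 (k.+2 + m) = iota 0 k ++ [:: k; k.+1] ++ iota k.+2 m.
  by rewrite iotaD -addn2 iotaD -catA add0n.
rewrite /NF E !rev_cat !map_cat !flatten_cat /=.
have pk1 : pik k k.+1 = k by rewrite /pik eqxx.
have pk0 : pik k k = k by rewrite /pik; case: eqP => //; lia.
rewrite pk1 pk0.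
set X := flatten _.
set Y := flatten [seq run (f j) j | j <- rev (iota 0 k)].
have -> : flatten [seq run (f (pik k j)) j | j <- rev (iota k.+2 m)] = X.
  rewrite /X; congr flatten; apply/eq_in_map => j.
  rewrite mem_rev mem_iota => /andP[hj _]; rewrite /pik; case: eqP => //; lia.
have -> : flatten [seq run (f (pik k j)) j | j <- rev (iota 0 k)] = Y.
  rewrite /Y; congr flatten; apply/eq_in_map => j.
  rewrite mem_rev mem_iota => /andP[_ hj]; rewrite /pik; case: eqP => //; lia.
rewrite !cats0 -!catA.
have hY1 : all (fun x => x.+1 < k.+2 + m) Y.
  apply: all_flat => s /mapP[j]; rewrite mem_rev mem_iota => /andP[_ hj] ->.
  by apply: all_run => x; lia.
have hY2 : all (fun x => (x.+1 < k) || (k.+1 < x)) Y.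
  apply: all_flat => s /mapP[j]; rewrite mem_rev mem_iota => /andP[_ hj] ->.
  by apply: all_run => x hx; apply/orP; left; lia.
apply: M_trans (M_cong_catl X (M_cong_catl _ (M_cong_catl _
          (comm_through hk hY1 hY2)))) _.
have -> : run (f k) k ++ k :: Y = run (f k) k.+1 ++ Y.
  by rewrite run_rcons // -catA.
have hfk : f k <= f k.+1 by apply: hmon.
apply: M_cong_catl; rewrite catA.
apply: M_trans (M_cong_catr Y (AbsL_all (a := f k) (c := k.+1)
   (B := run (f k.+1) k.+1) _ _)) _.
- lia.
- by apply: all_run => x; lia.
rewrite catA; apply: M_cong_catr.
apply: M_sym; apply: AbsR_all; first lia.
by apply: all_run => x; lia.
Qed.

Lemma Fw_reg r x : Fw r x <= x.
Proof.
elim: r => //= k r IH; rewrite /pik; case: eqP => [e|_]; lia.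
Qed.

Lemma Fw_mon r x y : x <= y -> Fw r x <= Fw r y.
Proof.
elim: r => //= k r IH /IH h; rewrite /pik.
case: eqP => [e1|n1]; case: eqP => [e2|n2]; lia.
Qed.

Lemma NF_id N : NF N id = [::].
Proof. by rewrite /NF; elim: (rev (iota 0 N)) => //= j s ->; rewrite run_nil. Qed.

Lemma word_NF N r : all (fun k => k.+1 < N) r -> M_cong N r (NF N (Fw r)).
Proof.
elim/last_ind: r => [|r k IH]; first by rewrite (NF_ext (g := id)) // NF_id => _; apply: rst_refl.
rewrite all_rcons => /andP[hk hr].
rewrite -cats1.
apply: M_trans (M_cong_catr [:: k] (IH hr)) _.
rewrite (@NF_ext N (Fw (r ++ [:: k])) (fun x => Fw r (pik k x))); last first.
  by move=> j _; rewrite Fw_cat.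
apply: NF_step => //; [exact: Fw_reg | exact: Fw_mon].
Qed.


Lemma sgenE N k (y : 'I_N) : k.+1 < N ->
  (sgen N k y : nat) = if y == k :> nat then k.+1 else if y == k.+1 :> nat then k else y.
Proof.
case: N y => [|n] y hk; first by case: y.
rewrite /sgen; case: tpermP => [->|->|h1 h2]; rewrite ?inordK; try lia.
- by rewrite eqxx.
- by case: eqP => //; rewrite eqxx.
case: eqP => [e|_]; first by case: h1; apply: val_inj; rewrite /= inordK // -e.
case: eqP => [e|_] //; first by case: h2; apply: val_inj; rewrite /= inordK // -e.
Qed.

Lemma sgen_ord N k (y z : 'I_N) : k.+1 < N ->
  ~~ ((y == k :> nat) && (z == k.+1 :> nat)) -> ~~ ((y == k.+1 :> nat) && (z == k :> nat)) ->
  (sgen N k y < sgen N k z) = (y < z).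
Proof.
move=> hk h1 h2; rewrite !sgenE //.
move: h1 h2; case: (nat_of_ord y =P k) => ?; case: (nat_of_ord y =P k.+1) => ?;
  case: (nat_of_ord z =P k) => ?; case: (nat_of_ord z =P k.+1) => ? //= _ _;
  apply/idP/idP; lia.
Qed.

Definition invset N (x : 'S_N) := [set p : 'I_N * 'I_N | (p.1 < p.2) && (x p.2 < x p.1)].
Lemma lenE N (x : 'S_N) : len x = #|invset x|. Proof. by []. Qed.

Definition pos n (x : 'S_n.+1) (k : nat) : 'I_n.+1 := (x^-1)%g (inord k).

Lemma xpos n (x : 'S_n.+1) k : k < n.+1 -> (x (pos x k) : nat) = k.
Proof. by move=> h; rewrite /pos permKV inordK. Qed.

Lemma pos_eq n (x : 'S_n.+1) k a : k < n.+1 -> (x a : nat) = k -> a = pos x k.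
Proof.
move=> h e; apply: (perm_inj (s := x)); apply: ord_inj; by rewrite xpos.
Qed.

Lemma len_sgen_le n (x : 'S_n.+1) k : k.+1 < n.+1 ->
  len (x * sgen n.+1 k)%g <= (len x).+1.
Proof.
move=> hk; rewrite !lenE.
set A := pos x k; set B := pos x k.+1.
set Q := if (A < B)%N then (A, B) else (B, A).
have sub : invset (x * sgen n.+1 k)%g \subset Q |: invset x.
  apply/subsetP => [[a b]]; rewrite !inE /= !permM => /andP[hab hs].
  fold (sgen n.+1 k) in hs.
  case: (boolP ((val (x a) == k) && (val (x b) == k.+1))) => [/andP[/eqP ea /eqP eb]|h1].
    have hA : a = A by apply: pos_eq => //; lia.
    have hB : b = B by apply: pos_eq.
    by rewrite /Q -hA -hB hab eqxx.
  case: (boolP ((x b == k :> nat) && (x a == k.+1 :> nat))) => [/andP[/eqP eb /eqP ea]|h2].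
    by move: hs; rewrite !sgenE // eb ea; repeat pcase; lia.
  by rewrite hab -(sgen_ord (y:=x b) (z:=x a) hk h2) ?hs ?orbT // andbC.
apply: leq_trans (subset_leq_card sub) _.
by rewrite cardsU1; case: (_ \notin _).
Qed.

Lemma len_sgen_lt n (x : 'S_n.+1) k : k.+1 < n.+1 -> pos x k.+1 < pos x k ->
  len (x * sgen n.+1 k)%g < len x.
Proof.
move=> hk hBA; rewrite !lenE.
set A := pos x k; set B := pos x k.+1.
have xA : (x A : nat) = k by apply: xpos; lia.
have xB : (x B : nat) = k.+1 by apply: xpos.
have inBA : (B, A) \in invset x by rewrite !inE /= hBA xA xB /=.
have sub : invset (x * sgen n.+1 k)%g \subset invset x :\ (B, A).
  apply/subsetP => [[a b]]; rewrite !inE /= !permM => /andP[hab hs].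
  fold (sgen n.+1 k) in hs.
  case: (boolP ((x b == k :> nat) && (x a == k.+1 :> nat))) => [/andP[/eqP eb /eqP ea]|h2].
    by move: hs; rewrite !sgenE // eb ea; repeat pcase; lia.
  case: (boolP ((x a == k :> nat) && (x b == k.+1 :> nat))) => [/andP[/eqP ea /eqP eb]|h1].
    have hA : a = A by apply: pos_eq => //; lia.
    have hB : b = B by apply: pos_eq.
    by exfalso; move: hab hBA; rewrite hA hB /A /B; lia.
  rewrite hab -(sgen_ord (y:=x b) (z:=x a) hk h2) ?hs ?andbT; last by rewrite andbC.
  apply/negP => /eqP [ea eb]; move: h2; rewrite ea eb xA xB eqxx.
  by case: eqP => //; lia.
have := subset_leq_card sub.
rewrite (cardsD1 (B, A) (invset x)) inBA; lia.
Qed.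

Lemma pos_neq n (x : 'S_n.+1) k : k.+1 < n.+1 -> pos x k != pos x k.+1.
Proof.
move=> hk; apply/eqP => /(congr1 (fun a => (x a : nat))).
rewrite !xpos //; lia.
Qed.

Lemma sorted_id n (x : 'S_n.+1) :
  (forall k, k.+1 < n.+1 -> pos x k < pos x k.+1) -> x = 1%g.
Proof.
move=> H; set f := fun i => (pos x i : nat).
have lo : forall i, i < n.+1 -> i <= f i.
  elim=> [|i IH] hi //; have := H i hi; have := IH (ltnW hi); rewrite /f; lia.
have up : forall d i, i + d = n -> f i <= i.
  elim=> [|d IH] i hi; first by rewrite /f; have := ltn_ord (pos x i); lia.
  have := IH i.+1 ltac:(lia); have := H i ltac:(lia); rewrite /f; lia.
apply/permP => a; rewrite perm1; apply: ord_inj.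
have e : pos x (x a) = a by rewrite /pos inord_val permK.
have := lo (x a) (ltn_ord _); have := up (n - x a) (x a) ltac:(have := ltn_ord (x a); lia).
by rewrite /f e; lia.
Qed.

Lemma descent n (x : 'S_n.+1) : x != 1%g ->
  exists k, k.+1 < n.+1 /\ len (x * sgen n.+1 k)%g < len x.
Proof.
move=> hx.
case: (boolP [forall k : 'I_n, pos x k < pos x k.+1]) => [/forallP H|].
  case/eqP: hx; apply: sorted_id => k hk.
  exact: (H (Ordinal (hk : k < n))).
rewrite negb_forall => /existsP[k hk].
exists k; split; first by rewrite ltnS.
apply: len_sgen_lt; first by rewrite ltnS.
have h2 := pos_neq x (k := k) ltac:(rewrite ltnS; exact: ltn_ord).
move: hk; rewrite -leqNgt => h1.
by rewrite ltn_neqAle h1 andbT eq_sym.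
Qed.

Lemma word_ex n (x : 'S_n.+1) : exists r, valid_word n.+1 r /\
  perm_of_word n.+1 r = x /\ size r <= len x.
Proof.
move: {2}(len x) (leqnn (len x)) => m; elim: m x => [|m IH] x hx.
  case: (eqVneq x 1%g) => [->|hx1]; first by exists [::].
  by have [k [_ h]] := descent hx1; lia.
case: (eqVneq x 1%g) => [->|hx1]; first by exists [::].
have [k [hk h]] := descent hx1.
have [r [hv [hp hs]]] := IH (x * sgen n.+1 k)%g ltac:(lia).
exists (k :: r); split; first by rewrite /valid_word /= hk.
split; last by rewrite /=; lia.
by rewrite /= hp -mulgA /sgen tperm2 mulg1.
Qed.

Lemma len_word n r : valid_word n.+1 r -> len (perm_of_word n.+1 r) <= size r.
Proof.
elim: r => /= [|k r IH].
  move=> _; rewrite leqn0 lenE cards_eq0; apply/eqP/setP => p; rewrite !inE !perm1.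
  by case: (ltnP p.1 p.2) => //= h; rewrite ltnNge (ltnW h).
rewrite /valid_word /= => /andP[hk hr]; fold (sgen n.+1 k).
by apply: leq_trans (len_sgen_le _ hk) _; rewrite ltnS IH.
Qed.

Lemma reduced_len n r (x : 'S_n.+1) : reduced_word r x -> size r = len x.
Proof.
move=> [hv [hp hmin]]; have [r0 [hv0 [hp0 hs0]]] := word_ex x.
have := hmin r0 hv0 hp0; have := len_word hv; rewrite hp; lia.
Qed.

Lemma reduced_ex n (x : 'S_n.+1) : exists r, reduced_word r x.
Proof.
have [r0 [hv0 [hp0 hs0]]] := word_ex x.
exists r0; split => //; split => // r' hv' hp'.
have := len_word hv'; rewrite hp'; lia.
Qed.

Definition sm N (x : 'S_N) (j : nat) : nat := \big[minn/N]_(l : 'I_N | j <= l) x l.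

Lemma sm_le N (x : 'S_N) j (l : 'I_N) : j <= l -> sm x j <= x l.
Proof.
move=> h; rewrite /sm.
suff H : forall r : seq 'I_N, l \in r -> \big[minn/N]_(i <- r | j <= i) x i <= x l.
  by apply: H; rewrite mem_index_enum.
elim=> // a r IH; rewrite inE big_cons => /orP[/eqP <-|hl].
  by rewrite h geq_minl.
by case: ifP => _; rewrite ?geq_min IH ?orbT.
Qed.

Lemma sm_ge N (x : 'S_N) j : N <= j -> sm x j = N.
Proof.
move=> h; rewrite /sm big_pred0 // => l; apply/negbTE; rewrite -ltnNge.
exact: leq_trans (ltn_ord l) h.
Qed.

Lemma sm_ex N (x : 'S_N) j : j < N -> exists l : 'I_N, j <= l /\ (x l : nat) = sm x j.
Proof.
move=> hj.
have : sm x j = N \/ exists l : 'I_N, j <= l /\ (x l : nat) = sm x j.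
  rewrite /sm; elim/big_rec: _ => [|i v hi [->|[l [hl e]]]].
    by left.
    by right; exists i; split => //; apply/esym/minn_idPl; apply: ltnW.
  case: (leqP (x i) v) => h.
    by right; exists i; split => //; apply/esym/minn_idPl.
  by right; exists l; split => //; rewrite -e; apply/esym/minn_idPr; rewrite e ltnW.
case=> // e.
have : sm x j <= x (Ordinal hj) by apply: sm_le.
by rewrite e; have := ltn_ord (x (Ordinal hj)); lia.
Qed.

Lemma sm_eq N (x : 'S_N) j v : j < N -> (exists l : 'I_N, j <= l /\ (x l : nat) = v) ->
  (forall l : 'I_N, j <= l -> v <= x l) -> sm x j = v.
Proof.
move=> hj [l [hl e]] H; have [l0 [hl0 e0]] := sm_ex x hj.
have := sm_le x hl; have := H l0 hl0; lia.
Qed.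

Lemma sm_sgen n (y : 'S_n.+1) k j : k.+1 < n.+1 -> pos y k < pos y k.+1 -> j < n.+1 ->
  sm (y * sgen n.+1 k)%g j = pik k (sm y j).
Proof.
move=> hk hp hj; have [l [hl e]] := sm_ex y hj.
set v := sm y j in e *.
have lb : forall l' : 'I_n.+1, j <= l' -> v <= y l' by move=> l' h; apply: sm_le.
rewrite /pik; case: (eqVneq v k.+1) => [ev|nv].
- apply: sm_eq => //; first by exists l; rewrite permM sgenE // e ev eqxx; case: eqP => //; lia.
  move=> l' hl'; have := lb l' hl'; rewrite permM sgenE //; repeat pcase; lia.
case: (eqVneq v k) => [ev|nv'].
- have el : l = pos y k by apply: pos_eq; lia.
  apply: sm_eq => //.
    exists (pos y k.+1); split; first by move: hl hp; rewrite el; lia.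
    by rewrite permM sgenE // xpos // eqxx; case: eqP => //; lia.
  move=> l' hl'; have := lb l' hl'; rewrite permM sgenE // ev; repeat pcase; lia.
apply: sm_eq => //.
  by exists l; split => //; rewrite permM sgenE // e; repeat pcase; lia.
move=> l' hl'; have := lb l' hl'; rewrite permM sgenE //; move: nv nv'.
repeat pcase; lia.
Qed.

Lemma Fw_sm n r : valid_word n.+1 r -> size r = len (perm_of_word n.+1 r) ->
  forall j, j < n.+1 -> Fw r j = sm (perm_of_word n.+1 r) j.
Proof.
elim: r => [|k r IH] /=.
  move=> _ _ j hj; symmetry; apply: sm_eq => //.
    by exists (inord j); rewrite perm1 inordK.
  by move=> l hl; rewrite perm1.
rewrite /valid_word /= => /andP[hk hr]; fold (sgen n.+1 k) => hs j hj.
set y := perm_of_word n.+1 r in hs *.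
have h1 := len_sgen_le y hk; have h2 := len_word hr.
have h2' : len y <= size r by [].
rewrite IH //; last by rewrite -/y; lia.
rewrite -/y sm_sgen //.
have h3 := pos_neq y hk.
case: (ltngtP (pos y k) (pos y k.+1)) => // h4.
  by have := len_sgen_lt hk h4; rewrite -/y; lia.
by move: h3; rewrite (ord_inj h4) eqxx.
Qed.

Lemma reduced_Fw n r (x : 'S_n.+1) : reduced_word r x ->
  forall j, j < n.+1 -> Fw r j = sm x j.
Proof.
move=> hr; have hl := reduced_len hr; case: hr => [hv [hp _]].
by rewrite -hp; apply: Fw_sm => //; rewrite hp.
Qed.

Lemma same_image_sm n (v w : 'S_n.+1) : same_image v w <-> sm v =1 sm w.
Proof.
split.
  move=> [r [s [hr [hs hc]]]] j.
  case: (ltnP j n.+1) => hj; last by rewrite !sm_ge.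
  by rewrite -(reduced_Fw hr hj) -(reduced_Fw hs hj) (M_cong_Fw hc).
move=> H; have [r hr] := reduced_ex v; have [s hs] := reduced_ex w.
exists r, s; split => //; split => //.
have e : NF n.+1 (Fw r) = NF n.+1 (Fw s).
  by apply: NF_ext => j hj; rewrite (reduced_Fw hr hj) (reduced_Fw hs hj) H.
case: hr => [hvr _]; case: hs => [hvs _].
apply: M_trans (word_NF hvr) _; rewrite e; apply: M_sym; exact: word_NF.
Qed.


Ltac ord3 a := case: a => [[|[|[|?]]] ?] //=.
Ltac bclose := first [lia | (apply/negbTE; rewrite -leqNgt; lia) | idtac].

Lemma c321P N (x : 'S_N) : contains x pat321 <->
  exists i j k : 'I_N, [/\ i < j, j < k, x k < x j & x j < x i].
Proof.
split.
  move=> [f [hinc hpat]].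
  exists (f (@Ordinal 3 0 isT)), (f (@Ordinal 3 1 isT)), (f (@Ordinal 3 2 isT)).
  split; try (apply: hinc => //).
  - by rewrite hpat.
  - by rewrite hpat.
move=> [i [j [k [hij hjk hkj hji]]]].
exists (fun a : 'I_3 => nth i [:: i; j; k] a); split.
  move=> a b; ord3 a; ord3 b; lia.
move=> a b; ord3 a; ord3 b; unfold pat321, pat231 => /=; bclose.
Qed.

Lemma c231P N (x : 'S_N) : contains x pat231 <->
  exists i j k : 'I_N, [/\ i < j, j < k, x k < x i & x i < x j].
Proof.
split.
  move=> [f [hinc hpat]].
  exists (f (@Ordinal 3 0 isT)), (f (@Ordinal 3 1 isT)), (f (@Ordinal 3 2 isT)).
  split; try (apply: hinc => //).
  - by rewrite hpat.
  - by rewrite hpat.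
move=> [i [j [k [hij hjk hki hij']]]].
exists (fun a : 'I_3 => nth i [:: i; j; k] a); split.
  move=> a b; ord3 a; ord3 b; lia.
move=> a b; ord3 a; ord3 b; unfold pat321, pat231 => /=; bclose.
Qed.

Lemma ord_neq N (a b : 'I_N) : a <> b -> (a : nat) <> b.
Proof. by move=> h e; apply: h; apply: ord_inj. Qed.

Lemma sm_swap N (v : 'S_N) (i j k : 'I_N) : i < j -> j < k -> v k < v i -> v k < v j ->
  sm (tperm i j * v)%g =1 sm v.
Proof.
move=> hij hjk hki hkj jj.
case: (ltnP jj N) => hjj; last by rewrite !sm_ge.
have [l [hl e]] := sm_ex v hjj.
set m := sm v jj in e *.
have lb : forall l' : 'I_N, jj <= l' -> m <= v l' by move=> l' h; apply: sm_le.
apply: sm_eq => //.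
  case: (eqVneq l i) => [eli|nli].
    by exists j; rewrite permM tpermR -e eli; split => //; move: hl; rewrite eli; lia.
  case: (eqVneq l j) => [elj|nlj].
    by have := lb k ltac:(move: hl; rewrite elj; lia); move: e; rewrite elj; lia.
  by exists l; rewrite permM tpermD // eq_sym.
move=> l' hl'; rewrite permM; case: tpermP => [ei|ej|n1 n2].
- by apply: lb; move: hl'; rewrite ei; lia.
- case: (leqP jj i) => h; first exact: lb.
  have := lb k ltac:(move: hl'; rewrite ej; lia); lia.
- exact: lb.
Qed.

Lemma len_swap N (v : 'S_N) (i j : 'I_N) : i < j -> v j < v i ->
  len (tperm i j * v)%g < len v.
Proof.
move=> hij hv; rewrite !lenE.
set t := tperm i j.
set mid := fun p : 'I_N => (i < p) && (p < j).
have midt : forall p, mid (t p) = mid p.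
  move=> p; rewrite /mid /t; case: tpermP => [->|->|//]; lia.
pose phi := fun p : 'I_N * 'I_N => if mid p.1 || mid p.2 then p else (t p.1, t p.2).
have phiK : involutive phi.
  move=> [a b]; rewrite /phi /=; case: (boolP (mid a || mid b)) => h /=; rewrite ?h //.
  by rewrite !midt (negbTE h) !tpermK.
have inij : (i, j) \in invset v by rewrite !inE /= hij hv.
have sub : phi @: invset (t * v)%g \subset invset v :\ (i, j).
  apply/subsetP => q /imsetP[[a b]]; rewrite !inE /= !permM => /andP[hab hs] ->.
  rewrite /phi /=; case: ifP => hm.
    rewrite /= hab /=; apply/andP; split.
      apply/negP => /eqP [ea eb]; move: hm; rewrite /mid ea eb; lia.
    move: hm hs; rewrite /mid /t.
    case: tpermP => [ea|ea|na1 na2]; case: tpermP => [eb|eb|nb1 nb2];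
      rewrite ?ea ?eb //= in hab *;
      try (have := ord_neq na1); try (have := ord_neq na2);
      try (have := ord_neq nb1); try (have := ord_neq nb2); lia.
  rewrite /= hs andbT; apply/andP; split.
    apply/negP => /eqP [ea eb].
    have e1 : a = j by rewrite -(tpermK i j a) -/t ea tpermL.
    have e2 : b = i by rewrite -(tpermK i j b) -/t eb tpermR.
    by move: hab hij; rewrite e1 e2; lia.
  move: hm hs; rewrite /mid /t.
  case: tpermP => [ea|ea|na1 na2]; case: tpermP => [eb|eb|nb1 nb2];
    rewrite ?ea ?eb //= in hab *;
    try (have := ord_neq na1); try (have := ord_neq na2);
    try (have := ord_neq nb1); try (have := ord_neq nb2); lia.
have := subset_leq_card sub.
rewrite card_imset; last exact: can_inj phiK.
rewrite (cardsD1 (i, j) (invset v)) inij; lia.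
Qed.

Lemma core321 N (u u' : 'S_N) (l : 'I_N) : sm u =1 sm u' ->
  (forall p : 'I_N, p < l -> u p = u' p) -> u l < u' l -> contains u' pat321.
Proof.
move=> hsm hpre hlt; apply/c321P.
set m := ((u'^-1)%g (u l)).
have um : u' m = u l by rewrite /m permKV.
have hlm : l < m.
  case: (ltngtP l m) => // h.
    have := hpre m h; rewrite um => /perm_inj e.
    by move: h; rewrite e; lia.
  by move: hlt; rewrite -um (ord_inj h); lia.
have [q [hq eq]] := sm_ex u (ltn_ord m).
have qnl : u q != u l.
  apply/negP => /eqP /perm_inj e; move: hq hlm; rewrite e; lia.
have h1 : sm u' m <= u' m by apply: sm_le.
have h2 : sm u' m < u l.
  rewrite -hsm -eq; move: h1; rewrite -hsm -eq um.
  by move: qnl; rewrite -(inj_eq val_inj) /=; lia.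
have [k [hk ek]] := sm_ex u' (ltn_ord m).
have hmk : m < k.
  case: (ltngtP m k) => // h; first by move: hk h; lia.
  by move: h2; rewrite -ek -(ord_inj h) um; lia.
exists l, m, k; split => //; rewrite ?um; lia.
Qed.

Lemma core231 N (u u' : 'S_N) (l : 'I_N) : sm u =1 sm u' ->
  (forall p : 'I_N, l < p -> u p = u' p) -> u l < u' l -> contains u' pat231.
Proof.
move=> hsm hpost hlt; apply/c231P.
set m := ((u'^-1)%g (u l)).
have um : u' m = u l by rewrite /m permKV.
have hml : m < l.
  case: (ltngtP l m) => // h.
    have := hpost m h; rewrite um => /perm_inj e.
    by move: h; rewrite e; lia.
  by move: hlt; rewrite -um (ord_inj h); lia.
have [q [hq eq]] := sm_ex u (ltn_ord l).
have hlq : l < q.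
  case: (ltngtP l q) => // h; first by move: hq h; lia.
  have [q' [hq' eq']] := sm_ex u' (ltn_ord l).
  move: eq'; rewrite -hsm -eq -(ord_inj h) -um => /ord_inj /perm_inj e.
  by move: hq' hml; rewrite e; lia.
have h1 : sm u l <= u l by apply: sm_le.
have qnl : (u q : nat) <> u l.
  by move=> /ord_inj /perm_inj e; move: hlq; rewrite e; lia.
exists m, l, q; split => //; rewrite ?um // -(hpost q hlq); lia.
Qed.

Lemma diff_ex N (u u' : 'S_N) : u <> u' -> exists l, u l != u' l.
Proof.
move=> h; apply: NNPP => H; apply: h; apply/permP => l.
by apply/eqP; apply: negbNE; apply/negP => hl; apply: H; exists l.
Qed.

Lemma uniq321 N (u u' : 'S_N) : sm u =1 sm u' -> avoids u pat321 ->
  avoids u' pat321 -> u = u'.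
Proof.
move=> hsm a1 a2; apply: NNPP => hne.
have [l0 hl0] := diff_ex hne.
case: (@arg_minnP _ l0 (fun l => u l != u' l) (fun l : 'I_N => nat_of_ord l) hl0) => l hl hmin.
have hpre : forall p : 'I_N, p < l -> u p = u' p.
  move=> p hp; apply/eqP; apply: negbNE; apply/negP => h.
  by have := hmin p h; lia.
have : (u l : nat) <> u' l by move=> e; move/eqP: hl; apply; apply: ord_inj.
case: (ltngtP (u l) (u' l)) => // h _.
  by apply: a2; apply: (core321 hsm hpre h).
apply: a1; apply: (core321 (u := u') (u' := u) (l := l)) => //.
by move=> p hp; rewrite hpre.
Qed.

Lemma uniq231 N (u u' : 'S_N) : sm u =1 sm u' -> avoids u pat231 ->
  avoids u' pat231 -> u = u'.
Proof.
move=> hsm a1 a2; apply: NNPP => hne.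
have [l0 hl0] := diff_ex hne.
case: (@arg_maxnP _ l0 (fun l => u l != u' l) (fun l : 'I_N => nat_of_ord l) hl0) => l hl hmax.
have hpost : forall p : 'I_N, l < p -> u p = u' p.
  move=> p hp; apply/eqP; apply: negbNE; apply/negP => h.
  by have := hmax p h; lia.
have : (u l : nat) <> u' l by move=> e; move/eqP: hl; apply; apply: ord_inj.
case: (ltngtP (u l) (u' l)) => // h _.
  by apply: a2; apply: (core231 hsm hpost h).
apply: a1; apply: (core231 (u := u') (u' := u) (l := l)) => //.
by move=> p hp; rewrite hpost.
Qed.

Lemma ex_min321 N (v : 'S_N) :
  exists u : 'S_N, [/\ sm u =1 sm v, avoids u pat321 & len u <= len v].
Proof.
move: {2}(@len N v) (leqnn (@len N v)) => d; elim: d v => [|d IH] v hv.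
  case: (classic (contains v pat321)) => hc; last by exists v.
  have [i [j [k [hij hjk hkj hji]]]] := (c321P v).1 hc.
  by have := len_swap hij hji; lia.
case: (classic (contains v pat321)) => hc; last by exists v.
have [i [j [k [hij hjk hkj hji]]]] := (c321P v).1 hc.
have hl := len_swap hij hji.
have hs := sm_swap hij hjk (ltn_trans hkj hji) hkj.
have [u [hu1 hu2 hu3]] := IH (tperm i j * v)%g ltac:(lia).
by exists u; split => //; [move=> x; rewrite hu1 hs | lia].
Qed.

Lemma len_bound N (v : 'S_N) : len v <= N * N.
Proof. by rewrite lenE; have := max_card (invset v); rewrite card_prod card_ord. Qed.

Lemma ex_max231 N (v : 'S_N) :
  exists u : 'S_N, [/\ sm u =1 sm v, avoids u pat231 & len v <= len u].
Proof.
move: {2}(N * N - @len N v) (leqnn (N * N - @len N v)) => d; elim: d v => [|d IH] v hv.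
  case: (classic (contains v pat231)) => hc; last by exists v.
  have [i [j [k [hij hjk hki hij']]]] := (c231P v).1 hc.
  have hl := len_swap (v := (tperm i j * v)%g) hij.
  rewrite !permM tpermL tpermR mulgA tperm2 mul1g in hl.
  have := hl hij'; have := len_bound (tperm i j * v)%g; lia.
case: (classic (contains v pat231)) => hc; last by exists v.
have [i [j [k [hij hjk hki hij']]]] := (c231P v).1 hc.
have hl := len_swap (v := (tperm i j * v)%g) hij.
rewrite !permM tpermL tpermR mulgA tperm2 mul1g in hl.
have hl' := hl hij'.
have hs := sm_swap hij hjk hki (ltn_trans hki hij').
have := len_bound (tperm i j * v)%g => hb.
have [u [hu1 hu2 hu3]] := IH (tperm i j * v)%g ltac:(lia).
by exists u; split => //; [move=> x; rewrite hu1 hs | lia].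
Qed.

Theorem mainTheorem1 (N : nat) (hN : 1 <= N) (w : 'S_N) :
  (exists u : 'S_N,
     [/\ same_image u w, avoids u pat321,
         (forall v : 'S_N, same_image v w -> avoids v pat321 -> v = u) &
         (forall v : 'S_N, same_image v w -> len u <= len v)]) /\
  (exists u : 'S_N,
     [/\ same_image u w, avoids u pat231,
         (forall v : 'S_N, same_image v w -> avoids v pat231 -> v = u) &
         (forall v : 'S_N, same_image v w -> len v <= len u)]).
Proof.
case: N hN w => // n _ w.
split.
- have [u [hu1 hu2 _]] := ex_min321 w.
  exists u; split => //.
  + by apply/same_image_sm.
  + move=> v /same_image_sm hv av.
    by apply: uniq321 => // x; rewrite hv hu1.
  + move=> v /same_image_sm hv.
    have [u' [h1 h2 h3]] := ex_min321 v.
    suff -> : u = u' by [].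
    by apply: uniq321 => // x; rewrite h1 hv hu1.
- have [u [hu1 hu2 _]] := ex_max231 w.
  exists u; split => //.
  + by apply/same_image_sm.
  + move=> v /same_image_sm hv av.
    by apply: uniq231 => // x; rewrite hv hu1.
  + move=> v /same_image_sm hv.
    have [u' [h1 h2 h3]] := ex_max231 v.
    suff -> : u = u' by [].
    by apply: uniq231 => // x; rewrite h1 hv hu1.
Qed.
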